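(* Let $p$ be a prime and $D$ an integer with $1 \le D \le p-1$. Let $k\ge1$, let $A_1,\dots,A_k\subseteq\mathbb{Z}_p$ be $D$-APs, and let $g_0,g_1\in\mathbb{Z}_p$. If $\mathrm{dist}_{p,D}(g_0,g_1) \ge \big|\sum_{i=1}^k A_i\big|$, then $g_0$ and $g_1$ are not both elements of $\sum_{i=1}^k A_i$.
   Context: $\mathbb{Z}_p=\{0,\dots,p-1\}$ under addition mod $p$. Sumset: $\sum_{i=1}^k A_i=\{a_1+\dots+a_k\bmod p : a_i\in A_i\}$. For $b\in\{0,\dots,D-1\}$, the $D$-AP with base $b$ is $A_{(b)}=\{b+iD : i\text{ integer},\ 0\le i\le\lfloor (p-1-b)/D\rfloor\}\subseteq\mathbb{Z}_p$; a $D$-AP is any set of this form. For $g_0,g_1\in\mathbb{Z}_p$, $\mathrm{dist}_{p,D}(g_0,g_1)=\min\{(g_1-g_0)D^{-1}\bmod p,\ (g_0-g_1)D^{-1}\bmod p\}$, with each term viewed as an integer in $\{0,\dots,p-1\}$ and $D^{-1}$ the inverse of $D$ mod $p$. *)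

(* Defs.v *)
From mathcomp Require Import all_boot.
Unset Printing Implicit Defensive.

Definition dap (p D b : nat) : {set 'I_p} :=
  [set x : 'I_p | [exists i : 'I_p.+1,
      (i <= (p - 1 - b) %/ D) && (nat_of_ord x == b + i * D)]].

Definition is_dap (p D : nat) (A : {set 'I_p}) : Prop :=
  exists2 b, b < D & A = dap p D b.

Definition sumset (p k : nat) (A : 'I_k -> {set 'I_p}) : {set 'I_p} :=
  [set x : 'I_p | [exists a : {ffun 'I_k -> 'I_p},
      [forall i, a i \in A i] && (nat_of_ord x == (\sum_(i < k) nat_of_ord (a i)) %% p)]].

Definition inv_mod (p D : nat) : nat :=
  if [pick d : 'I_p | (D * d) %% p == 1 %% p] is Some d then nat_of_ord d else 0.

Definition dist_pD (p D g0 g1 : nat) : nat :=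
  minn (((g1 + (p - g0)) * inv_mod p D) %% p) (((g0 + (p - g1)) * inv_mod p D) %% p).

(* Main.v *)
Require Import Defs.
From mathcomp Require Import all_boot.
From mathcomp Require Import zify.

Lemma greedy_sum (f : nat -> nat) n J :
  \sum_(i < n) minn (f i) (J - \sum_(j < i) f j) = minn J (\sum_(i < n) f i).
Proof.
elim: n => [|n IH]; first by rewrite !big_ord0 minn0.
rewrite !big_ord_recr /= IH.
set P := \sum_(i < n) f i.
lia.
Qed.

Lemma inv_mod_spec p D : prime p -> 1 <= D <= p - 1 -> (D * inv_mod p D) %% p = 1.
Proof.
move=> pr /andP[D1 Dp].
have p1 := prime_gt1 pr.
have cop : coprime D p.
  by rewrite coprime_sym prime_coprime // gtnNdvd //; lia.
have [[u1 u2] /= hu] := coprimeP _ D1 cop.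
rewrite /inv_mod; case: pickP => [d /eqP -> | Hn]; first by rewrite modn_small.
have p0 : 0 < p by lia.
have := Hn (Ordinal (ltn_pmod u1 p0)); rewrite /= modnMmr.
have -> : D * u1 = 1 + u2 * p by lia.
by rewrite addnC modnMDl eqxx.
Qed.

Theorem corollary2p7 (p D k : nat) (A : 'I_k -> {set 'I_p}) (g0 g1 : 'I_p) :
  prime p -> 1 <= D <= p - 1 -> 1 <= k ->
  (forall i, is_dap p D (A i)) ->
  #|sumset p k A| <= dist_pD p D g0 g1 ->
  ~ (g0 \in sumset p k A /\ g1 \in sumset p k A).
Proof.
move=> pr hD k1 hA hcard [g0S g1S].
have hu := @inv_mod_spec p D pr hD.
move: hD => /andP[D1 Dp].
have p1 := prime_gt1 pr.
have p0 : 0 < p by lia.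
have : forall i, exists bi, bi < D /\ A i = dap p D bi.
  by move=> i; case: (hA i) => bi ? ?; exists bi.
case/fin_all_exists => b hb.
set S := sumset p k A.
set u := inv_mod p D.
pose m i := (p - 1 - b i) %/ D.
pose B := \sum_(i < k) b i.
pose M := \sum_(i < k) m i.
have rep : forall x : 'I_p, x \in S -> exists2 J, J <= M & nat_of_ord x = (B + D * J) %% p.
  move=> x; rewrite inE => /existsP [a /andP [/forallP ha /eqP hx]].
  have hai : forall i, (a i - b i) %/ D <= m i /\ nat_of_ord (a i) = b i + (a i - b i) %/ D * D.
    move=> i; have := ha i; rewrite (hb i).2 inE => /existsP [ti /andP [hti /eqP hai]].
    rewrite hai addKn mulnK //; split => //.
  exists (\sum_(i < k) (a i - b i) %/ D).
    by apply: leq_sum => i _; case: (hai i).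
  rewrite hx (eq_bigr _ (fun i _ => (hai i).2)) big_split /= -big_distrl /= mulnC.
  done.
pose sOrd J : 'I_p := Ordinal (ltn_pmod (B + D * J) p0).
have conv : forall J, J <= M -> sOrd J \in S.
  move=> J HJ.
  pose f j := if @insub _ (fun j => j < k) _ j is Some i then m i else 0.
  have fm : forall i : 'I_k, f i = m i by move=> i; rewrite /f valK.
  pose t (i : 'I_k) := minn (f i) (J - \sum_(j < i) f j).
  have tm : forall i, t i <= m i by move=> i; rewrite -fm geq_minl.
  have hlt : forall i, b i + t i * D < p.
    move=> i; have := leq_divM (p - 1 - b i) D; have := leq_mul2r D (t i) (m i).
    rewrite tm orbT; have := (hb i).1; move: (t i * D) (m i * D) => x y; lia.
  have st : \sum_(i < k) t i = J.
    rewrite /t greedy_sum.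
    have -> : \sum_(i < k) f i = M by apply: eq_bigr => i _; rewrite fm.
    lia.
  pose a := [ffun i => Ordinal (hlt i)].
  rewrite inE; apply/existsP; exists a; apply/andP; split.
    apply/forallP => i; rewrite ffunE (hb i).2 inE; apply/existsP.
    have tp : t i < p.+1.
      have := leq_div (p - 1 - b i) D; have := tm i; rewrite /m; lia.
    exists (Ordinal tp); rewrite /= eqxx andbT; exact: tm.
  apply/eqP; rewrite /=.
  under eq_bigr do rewrite ffunE /=.
  by rewrite big_split /= -big_distrl /= st mulnC.
have key : forall (x y : 'I_p) Jx Jy, Jx <= Jy -> Jy <= M ->
    nat_of_ord x = (B + D * Jx) %% p -> nat_of_ord y = (B + D * Jy) %% p ->
    ((y + (p - x)) * u) %% p < #|S|.
  move=> x y Jx Jy hxy hyM hx hy.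
  pose e := Jy - Jx.
  have hJy : Jy = Jx + e by rewrite /e subnKC.
  have h1 : y + (p - x) = D * e %[mod p].
    rewrite hy hJy mulnDr addnA modnDml.
    rewrite -addnA (addnC (D * e)) -(modnDml (B + D * Jx)) -hx addnA subnKC; last exact: ltnW.
    by rewrite modnDl.
  have he : ((y + (p - x)) * u) %% p = e %% p.
    by rewrite -modnMml h1 modnMml mulnAC -modnMml hu mul1n.
  rewrite he.
  pose e' := e %% p.
  have e'p : e' < p by apply: ltn_pmod.
  have e'e : e' <= e by apply: leq_mod.
  pose s (t : 'I_e'.+1) := sOrd (Jx + t).
  have sinj : injective s.
    move=> t1 t2 /(congr1 val) /= /eqP.
    rewrite !mulnDr !addnA eqn_modDl => /eqP h.
    have h2 : (D * t1 * u) %% p = (D * t2 * u) %% p by rewrite -modnMml h modnMml.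
    move: h2; rewrite !(mulnAC D _ u) -!(modnMml (D * u)) hu !mul1n.
    have t1p : (t1 : nat) < p by apply: leq_trans e'p; exact: ltn_ord t1.
    have t2p : (t2 : nat) < p by apply: leq_trans e'p; exact: ltn_ord t2.
    rewrite (modn_small t1p) (modn_small t2p) => h3; exact: ord_inj h3.
  have sub : s @: [set: 'I_e'.+1] \subset S.
    apply/subsetP => z /imsetP [t _ ->]; apply: conv.
    apply: leq_trans hyM; rewrite hJy leq_add2l; apply: leq_trans e'e; exact: ltn_ord t.
  by have := subset_leq_card sub; rewrite card_imset // cardsT card_ord.
have [J0 HJ0 E0] := rep _ g0S.
have [J1 HJ1 E1] := rep _ g1S.
move: hcard; rewrite /dist_pD.
case: (leqP J0 J1) => HJ.
  move/leq_trans/(_ (geq_minl _ _)); rewrite leqNgt => /negP; apply.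
  exact: key _ _ _ _ HJ HJ1 E0 E1.
move/leq_trans/(_ (geq_minr _ _)); rewrite leqNgt => /negP; apply.
exact: key _ _ _ _ (ltnW HJ) HJ0 E1 E0.
Qed.
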